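(* Let $q$ be a prime power, $t\ge1$, $s<t$ a nonnegative integer, and $W=\{0,w_1,\dots,w_{q^s-1}\}$ an $\mathbb{F}_q$-subspace of $\mathbb{F}_{q^t}$ of dimension $s$. Let $\alpha^*\in\mathbb{F}_{q^t}$, let $\{\beta_1,\dots,\beta_t\}$ be an arbitrary $\mathbb{F}_q$-basis of $\mathbb{F}_{q^t}$, and for $i=1,\dots,t$ let \[ g_i(x)=\beta_i\prod_{j=1}^{q^s-1}\Big(x-\big(\alpha^*-w_j^{-1}\beta_i\big)\Big). \] Then $\{g_1(\alpha^* ),\dots,g_t(\alpha^* )\}$ has rank $t$ over $\mathbb{F}_q$. *)

(* Defs.v *)
From HB Require Import structures.
From mathcomp Require Import all_boot all_order all_algebra all_field.
Set Implicit Arguments. Unset Strict Implicit. Unset Printing Implicit Defensive.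
Import GRing.Theory.
Local Open Scope ring_scope.

(* g_i(x) = beta_i * prod_{w in ws} (x - (alpha - w^{-1} beta_i)),
   where ws enumerates the nonzero elements w_1,...,w_{q^s-1} of W. *)
Definition gpoly (L : fieldType) (ws : seq L) (alpha b : L) : {poly L} :=
  b%:P * \prod_(w <- ws) ('X - (alpha - w^-1 * b)%:P).

(* Main.v *)
Require Import Defs.
From HB Require Import structures.
From mathcomp Require Import all_boot all_order all_algebra all_field.
Import GRing.Theory.
Local Open Scope ring_scope.

Section Aux.
Variables (F : finFieldType) (L : fieldExtType F).

Lemma powq_add (k : nat) (x y : L) :
  (x + y) ^+ (#|F| ^ k) = x ^+ (#|F| ^ k) + y ^+ (#|F| ^ k).
Proof.
have [p _ pc] := finPcharP F.
have hq : #|F| = (p ^ logn p #|F|)%N := card_pprimeChar pc.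
have pcL : p \in [pchar L] by rewrite (pchar_lalg L).
rewrite hq -expnM; elim: (_ * k)%N => [|n IHn]; first by rewrite !expr1.
by rewrite expnSr !exprM IHn -!(pFrobenius_autE pcL) rmorphD.
Qed.

Lemma powq_scale (k : nat) (a : F) (x : L) :
  (a *: x) ^+ (#|F| ^ k) = a *: x ^+ (#|F| ^ k).
Proof.
have ha : a ^+ (#|F| ^ k) = a.
  elim: k => [|k IHk]; first by rewrite expr1.
  by rewrite expnSr exprM IHk expf_card.
rewrite -[a *: x]mulr_algl -[a *: (x ^+ _)]mulr_algl exprMn.
rewrite -(rmorphXn (in_alg L)) /=.
by rewrite ha.
Qed.

End Aux.

Theorem lemma4 (F : finFieldType) (L : fieldExtType F) (t s : nat)
  (W : {vspace L}) (ws : seq L) (alpha : L) (beta : t.-tuple L) :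
  \dim {:L} = t -> (1 <= t)%N -> (s < t)%N -> \dim W = s ->
  uniq ws -> 0 \notin ws ->
  (forall x : L, (x \in W) = (x == 0) || (x \in ws)) ->
  basis_of {:L} beta ->
  \dim <<[seq (gpoly ws alpha b).[alpha] | b <- beta]>>%VS = t.
Proof.
move=> dimL t1 st dimW uws nz0 Wmem bas.
have hN : (size ws).+1 = (#|F| ^ s)%N.
  pose fL := finvect_type L.
  have := card_vspace (W : {vspace fL}); rewrite dimW => <-.
  have -> : #|(W : {vspace fL})| = #|(0 : fL) :: (ws : seq fL)|.
    by apply: eq_card => x; rewrite !inE Wmem.
  by apply/esym/card_uniqP; rewrite /= nz0.
set c := \prod_(w <- ws) w^-1.
have hval b : (gpoly ws alpha b).[alpha] = c * b ^+ (#|F| ^ s).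
  rewrite /gpoly hornerM hornerC horner_prod.
  rewrite (eq_bigr (fun w => w^-1 * b)); last first.
    by move=> w _; rewrite !hornerE opprB addrC subrK.
  rewrite big_split /= -/c -hN exprS mulrCA; congr (_ * (_ * _)).
  by rewrite (big_nth 0) prodr_const_nat subn0.
have c0 : c != 0.
  rewrite /c prodf_seq_neq0; apply/allP => w wi /=.
  by rewrite invr_eq0; apply: contraNneq nz0 => <-.
set S := [seq _ | b <- beta].
have szS : size S = t by rewrite size_map size_tuple.
suff : free S by rewrite /free szS => /eqP.
have freeb : free beta by case/andP: bas.
pose St := Tuple (introT eqP szS).
rewrite -[S]/(tval St); apply/freeP => k hk.
have hb : \sum_(i < t) k i *: beta`_i = 0.
  have : c * (\sum_(i < t) k i *: beta`_i) ^+ (#|F| ^ s) = 0.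
    have p0 : (0 : L) ^+ (#|F| ^ s) = 0.
      by rewrite expr0n eqn0Ngt expn_gt0 (ltnW (finNzRing_gt1 F)).
    rewrite -[RHS]hk /= (big_morph (fun x => x ^+ (#|F| ^ s)) (@powq_add _ _ s) p0).
    rewrite mulr_sumr; apply: eq_bigr => i _.
    rewrite (nth_map 0) ?size_tuple // hval powq_scale.
    by rewrite scalerAr.
  by move/eqP; rewrite mulf_eq0 (negbTE c0) /= expf_eq0 => /andP[_ /eqP].
by move/freeP: freeb => /(_ k hb).
Qed.
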